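(* For all $\alpha,\beta\ge 0$ one has $I(\alpha,\beta)<\sqrt{\pi/2}$, and $\sup_{\alpha,\beta\ge 0}I(\alpha,\beta)=\lim_{t\to+\infty}I(t,0)=\sqrt{\pi/2}$.
   Context: For $\alpha,\beta\ge 0$ define $I(\alpha,\beta)=\exp\left(-\frac{\alpha\beta}{2}\right)\int_{-\alpha}^{\beta}\exp\left(-\frac{\sigma^2}{2}\right)d\sigma$. *)

(* Defs.v *)
From Stdlib Require Import Reals.
From Coquelicot Require Import Coquelicot.
Open Scope R_scope.

Definition I (alpha beta : R) : R :=
  exp (- (alpha * beta) / 2) * RInt (fun s => exp (- (s ^ 2) / 2)) (- alpha) beta.

(* Main.v *)
Require Import Defs.
From Stdlib Require Import Reals Lra.
From Coquelicot Require Import Coquelicot.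
Open Scope R_scope.

Definition g (s : R) : R := exp (- (s ^ 2) / 2).
Definition G (x : R) : R := RInt g 0 x.
Definition hf (t x : R) : R := exp (- (t ^ 2 * (1 + x ^ 2)) / 2) / (1 + x ^ 2).
Definition H (t : R) : R := RInt (hf t) 0 1.

Lemma onepos (x : R) : 0 < 1 + x ^ 2.
Proof. nra. Qed.

Lemma g_cont x : continuous g x.
Proof. apply (ex_derive_continuous (K:=R_AbsRing) (V:=R_NormedModule)). unfold g. auto_derive. auto. Qed.

Lemma g_pos x : 0 < g x.
Proof. apply exp_pos. Qed.

Lemma ex_RInt_g a b : ex_RInt g a b.
Proof. apply (ex_RInt_continuous (V:=R_CompleteNormedModule)). intros; apply g_cont. Qed.

Lemma G_derive x : is_derive G x (g x).
Proof.
  apply is_derive_RInt with (a := 0).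
  - apply filter_forall. intros y. apply (RInt_correct (V:=R_CompleteNormedModule)), ex_RInt_g.
  - apply g_cont.
Qed.

Lemma hf_cont t x : continuous (hf t) x.
Proof. apply (ex_derive_continuous (K:=R_AbsRing) (V:=R_NormedModule)). unfold hf. auto_derive. generalize (onepos x); lra. Qed.

Lemma ex_RInt_hf t a b : ex_RInt (hf t) a b.
Proof. apply (ex_RInt_continuous (V:=R_CompleteNormedModule)). intros; apply hf_cont. Qed.

Definition dhf (t x : R) : R := - t * exp (- (t ^ 2 * (1 + x ^ 2)) / 2).

Lemma Derive_hf u v : Derive (fun z => hf z v) u = dhf u v.
Proof.
  apply is_derive_unique. unfold hf, dhf. auto_derive.
  - generalize (onepos v); lra.
  - replace (- (u * (u * 1) * (1 + v * (v * 1))) * / 2) with (- (u ^ 2 * (1 + v ^ 2)) / 2) by (unfold Rdiv; ring).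
    generalize (onepos v); intros; field. nra.
Qed.

Lemma dhf_cont x t : continuity_2d_pt dhf x t.
Proof.
  unfold dhf.
  apply continuity_2d_pt_mult.
  - apply continuity_2d_pt_opp, continuity_2d_pt_id1.
  - apply continuity_1d_2d_pt_comp with (f := exp) (g := fun u v => - (u ^ 2 * (1 + v ^ 2)) / 2).
    + apply derivable_continuous_pt, derivable_pt_exp.
    + apply continuity_2d_pt_ext with (f := fun u v => (u * u * (1 + v * v)) * (- / 2)).
      { intros; field. }
      apply continuity_2d_pt_mult; [|apply continuity_2d_pt_const].
      apply continuity_2d_pt_mult; [apply continuity_2d_pt_mult; apply continuity_2d_pt_id1|].
      apply continuity_2d_pt_plus; [apply continuity_2d_pt_const|].
      apply continuity_2d_pt_mult; apply continuity_2d_pt_id2.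
Qed.

Lemma H_derive x : is_derive H x (- g x * G x).
Proof.
  assert (D := is_derive_RInt_param hf 0 1 x).
  assert (E : RInt (fun t => Derive (fun u => hf u t) x) 0 1 = - g x * G x).
  { rewrite (RInt_ext _ (fun t => scal (- g x) (scal x (g (x * t + 0))))).
    - rewrite (RInt_scal (V:=R_CompleteNormedModule)).
      + rewrite (RInt_comp_lin (V:=R_CompleteNormedModule)).
        * unfold G. rewrite Rmult_0_r, Rplus_0_r, Rmult_1_r, Rplus_0_r. reflexivity.
        * apply ex_RInt_g.
      + apply (ex_RInt_continuous (V:=R_CompleteNormedModule)). intros.
        apply (ex_derive_continuous (K:=R_AbsRing) (V:=R_NormedModule)).
        unfold g, scal; simpl; unfold mult; simpl. auto_derive. auto.
    - intros t _. rewrite Derive_hf. unfold dhf, g, scal; simpl; unfold mult; simpl.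
      replace (exp (- (x * (x * 1) * (1 + t * (t * 1))) / 2)) with
        (exp (- (x * (x * 1)) / 2) * exp (- ((x * t + 0) * ((x * t + 0) * 1)) / 2)).
      { ring. }
      rewrite <- exp_plus. f_equal. field. }
  unfold H. rewrite <- E. apply D.
  - apply filter_forall. intros y t _. unfold hf. auto_derive. generalize (onepos t); lra.
  - intros t _. apply continuity_2d_pt_ext with (f := dhf).
    { intros; symmetry; apply Derive_hf. }
    apply dhf_cont.
  - apply filter_forall. intros; apply ex_RInt_hf.
Qed.

Lemma F_derive t : is_derive (fun t => G t * G t + 2 * H t) t 0.
Proof.
  eapply is_derive_ext. intros; reflexivity.
  evar (l : R). replace 0 with l.
  - apply (is_derive_plus (K:=R_AbsRing) (V:=R_NormedModule)).
    + apply (is_derive_mult (K:=R_AbsRing)). apply G_derive. apply G_derive.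
      intros; apply Rmult_comm.
    + apply is_derive_scal. apply H_derive.
  - unfold l, plus, mult, scal; simpl; unfold mult; simpl. ring.
Qed.

Lemma H0 : H 0 = PI / 4.
Proof.
  unfold H.
  rewrite (RInt_ext _ (fun x => / (1 + x²))).
  - apply is_RInt_unique.
    replace (PI / 4) with (minus (atan 1) (atan 0)).
    + apply (is_RInt_derive (V:=R_CompleteNormedModule)).
      * intros; apply is_derive_atan.
      * intros. apply (ex_derive_continuous (K:=R_AbsRing) (V:=R_NormedModule)).
        auto_derive. unfold Rsqr. nra.
    + rewrite atan_1, atan_0. unfold minus, plus, opp; simpl. ring.
  - intros x _. unfold hf, Rsqr. replace (- (0 ^ 2 * (1 + x ^ 2)) / 2) with 0 by (unfold Rdiv; ring).
    rewrite exp_0. unfold Rdiv. rewrite Rmult_1_l. f_equal. ring.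
Qed.

Lemma F_const t : G t * G t + 2 * H t = PI / 2.
Proof.
  assert (F0 : G 0 * G 0 + 2 * H 0 = PI / 2).
  { unfold G at 1 2. rewrite RInt_point. rewrite H0. unfold zero; simpl. field. }
  destruct (Rtotal_order t 0) as [Ht|[Ht|Ht]].
  - rewrite <- F0. apply (eq_is_derive (V:=R_NormedModule) (fun t => G t * G t + 2 * H t)); auto.
    intros; apply F_derive.
  - subst; auto.
  - rewrite <- F0. symmetry. apply (eq_is_derive (V:=R_NormedModule) (fun t => G t * G t + 2 * H t)); auto.
    intros; apply F_derive.
Qed.

Lemma exp_le x y : x <= y -> exp x <= exp y.
Proof. intros [Hl|He]. left; apply exp_increasing; auto. subst; right; auto. Qed.

Lemma g_lim : is_lim g p_infty 0.
Proof.
  unfold g.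
  apply (is_lim_comp (fun y => exp y) (fun t => - (t ^ 2) / 2) p_infty 0 m_infty).
  - apply is_lim_exp_m.
  - apply is_lim_le_m_loc with (f := fun t => - t).
    + exists 2. intros y Hy. nra.
    + apply (is_lim_opp (fun y => y) p_infty p_infty). apply is_lim_id.
  - exists 0. intros; discriminate.
Qed.

Lemma H_pos t : 0 < H t.
Proof.
  apply RInt_gt_0. lra.
  - intros x _. unfold hf. apply Rdiv_lt_0_compat. apply exp_pos. apply onepos.
  - intros; apply hf_cont.
Qed.

Lemma H_le t : H t <= g t.
Proof.
  unfold H.
  apply Rle_trans with (RInt (fun _ => g t) 0 1).
  - apply RInt_le. lra. apply ex_RInt_hf.
    apply (ex_RInt_const (V:=R_CompleteNormedModule)).
    intros x Hx. unfold hf, g.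
    assert (E : exp (- (t ^ 2 * (1 + x ^ 2)) / 2) <= exp (- t ^ 2 / 2)).
    { apply exp_le. assert (0 <= t ^ 2 * x ^ 2) by (apply Rmult_le_pos; nra). lra. }
    assert (P := exp_pos (- (t ^ 2 * (1 + x ^ 2)) / 2)).
    apply Rle_trans with (exp (- (t ^ 2 * (1 + x ^ 2)) / 2)); auto.
    unfold Rdiv at 1. rewrite <- (Rmult_1_r (exp (- (t ^ 2 * (1 + x ^ 2)) / 2))) at 2.
    apply Rmult_le_compat_l. lra.
    rewrite <- Rinv_1. apply Rinv_le_contravar. lra. nra.
  - rewrite RInt_const. unfold scal; simpl; unfold mult; simpl. lra.
Qed.

Lemma G_ge0 t : 0 <= t -> 0 <= G t.
Proof.
  intros Ht. apply RInt_ge_0; auto. apply ex_RInt_g. intros; left; apply g_pos.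
Qed.

Lemma G_eq t : 0 <= t -> G t = sqrt (PI / 2 - 2 * H t).
Proof.
  intros Ht. rewrite <- (F_const t). replace (G t * G t + 2 * H t - 2 * H t) with (G t * G t) by ring.
  rewrite sqrt_square; auto. apply G_ge0; auto.
Qed.

Lemma G_lt t : 0 <= t -> G t < sqrt (PI / 2).
Proof.
  intros Ht. rewrite G_eq; auto. apply sqrt_lt_1_alt. split.
  - rewrite <- (F_const t). replace (G t * G t + 2 * H t - 2 * H t) with (G t * G t) by ring.
    apply Rle_0_sqr.
  - generalize (H_pos t); lra.
Qed.

Lemma G_lim : is_lim G p_infty (sqrt (PI / 2)).
Proof.
  apply is_lim_ext_loc with (f := fun t => sqrt (PI / 2 - 2 * H t)).
  - exists 0. intros; symmetry; apply G_eq; lra.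
  - apply is_lim_comp_continuous; [|apply continuous_sqrt].
    replace (PI / 2) with (PI / 2 - 2 * 0) at 2 by ring.
    apply (is_lim_minus (fun _ => PI / 2) (fun t => 2 * H t) p_infty (PI / 2) (2 * 0)).
    + apply is_lim_const.
    + apply (is_lim_scal_l H 2 p_infty 0).
      apply is_lim_le_le_loc with (f := fun _ => 0) (g := g).
      * exists 0. intros y _. split. left; apply H_pos. apply H_le.
      * apply is_lim_const.
      * apply g_lim.
    + unfold is_Rbar_minus, is_Rbar_plus; simpl. do 2 f_equal. ring.
Qed.

Lemma cosh_abs x : exp x + exp (- x) = exp (Rabs x) + exp (- Rabs x).
Proof.
  unfold Rabs; destruct (Rcase_abs x); [rewrite Ropp_involutive; ring|ring].
Qed.

Lemma cosh_mono a b : Rabs b <= Rabs a -> exp b + exp (- b) <= exp a + exp (- a).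
Proof.
  intros Hab. rewrite (cosh_abs a), (cosh_abs b).
  set (a' := Rabs a) in *. set (b' := Rabs b) in *.
  assert (Hb : 0 <= b') by apply Rabs_pos.
  assert (E : exp a' + exp (- a') - (exp b' + exp (- b')) =
              (exp a' - exp b') * (1 - exp (- a') * exp (- b'))).
  { assert (Ea : exp a' * exp (- a') = 1) by (rewrite <- exp_plus, Rplus_opp_r, exp_0; auto).
    assert (Eb : exp b' * exp (- b') = 1) by (rewrite <- exp_plus, Rplus_opp_r, exp_0; auto).
    transitivity (exp a' + exp (-a') - (exp b' + exp (-b')) ); [ring|].
    rewrite Rmult_minus_distr_r, !Rmult_minus_distr_l, Rmult_1_r, Rmult_1_r.
    replace (exp a' * (exp (- a') * exp (- b'))) with (exp (- b')) by
      (rewrite <- Rmult_assoc, Ea; ring).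
    replace (exp b' * (exp (- a') * exp (- b'))) with (exp (- a')) by
      (rewrite (Rmult_comm (exp (-a'))), <- Rmult_assoc, Eb; ring).
    ring. }
  assert (0 <= (exp a' - exp b') * (1 - exp (- a') * exp (- b'))).
  { apply Rmult_le_pos.
    - generalize (exp_le _ _ Hab); lra.
    - rewrite <- exp_plus. assert (Hq : exp (- a' + - b') <= exp 0) by (apply exp_le; lra).
      rewrite exp_0 in Hq; lra. }
  lra.
Qed.

Lemma pointwise (c r m y : R) : r ^ 2 = c + m ^ 2 -> Rabs m <= r ->
  exp (- c / 2) * (exp (- ((y + m) ^ 2) / 2) + exp (- ((- y + m) ^ 2) / 2))
  <= exp (- ((y + r) ^ 2) / 2) + exp (- ((- y + r) ^ 2) / 2).
Proof.
  intros Hr Hm.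
  set (A := exp (- (y ^ 2 + r ^ 2) / 2)).
  assert (E1 : exp (- ((y + r) ^ 2) / 2) = A * exp (- (r * y))).
  { unfold A; rewrite <- exp_plus; f_equal; field. }
  assert (E2 : exp (- ((- y + r) ^ 2) / 2) = A * exp (r * y)).
  { unfold A; rewrite <- exp_plus; f_equal; field. }
  assert (E3 : exp (- c / 2) * (exp (- ((y + m) ^ 2) / 2) + exp (- ((- y + m) ^ 2) / 2))
               = A * (exp (- (m * y)) + exp (m * y))).
  { unfold A. rewrite Rmult_plus_distr_l, Rmult_plus_distr_l, <- !exp_plus.
    f_equal; f_equal.
    - replace (y ^ 2 + r ^ 2) with (y ^ 2 + c + m ^ 2) by (rewrite Hr; ring). field.
    - replace (y ^ 2 + r ^ 2) with (y ^ 2 + c + m ^ 2) by (rewrite Hr; ring). field. }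
  rewrite E1, E2, E3, <- Rmult_plus_distr_l.
  apply Rmult_le_compat_l. left; apply exp_pos.
  rewrite (Rplus_comm (exp (- (m * y)))), (Rplus_comm (exp (- (r * y)))).
  apply cosh_mono. rewrite !Rabs_mult.
  apply Rmult_le_compat_r. apply Rabs_pos.
  rewrite (Rabs_right r). auto. generalize (Rabs_pos m); lra.
Qed.

Lemma shift (f : R -> R) (Hf : forall a b, ex_RInt f a b) c a b :
  RInt f a b = RInt (fun y => f (y + c)) (a - c) (b - c).
Proof.
  rewrite (RInt_ext (fun y => f (y + c)) (fun y => scal 1 (f (1 * y + c)))).
  - rewrite (RInt_comp_lin (V:=R_CompleteNormedModule)).
    + f_equal; simpl; ring.
    + apply Hf.
  - intros. unfold scal; simpl; unfold mult; simpl. rewrite !Rmult_1_l. reflexivity.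
Qed.

Lemma sym (f : R -> R) (Hf : forall a b, ex_RInt f a b)
  (Hf' : forall a b, ex_RInt (fun y => f (- y)) a b) a :
  RInt f (- a) a = RInt (fun y => f y + f (- y)) 0 a.
Proof.
  rewrite <- (RInt_Chasles (V:=R_CompleteNormedModule) f (- a) 0 a); auto.
  rewrite (RInt_plus (V:=R_CompleteNormedModule)); auto.
  unfold plus; simpl. rewrite Rplus_comm. f_equal.
  assert (E : RInt (fun y => scal (-1) (f (-1 * y + 0))) 0 a = RInt f (-1 * 0 + 0) (-1 * a + 0)).
  { apply (RInt_comp_lin (V:=R_CompleteNormedModule)). apply Hf. }
  rewrite (RInt_ext (fun y => scal (-1) (f (-1 * y + 0))) (fun y => opp (f (- y)))) in E.
  2:{ intros. unfold opp, scal; simpl; unfold mult, opp; simpl.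
      replace (-1 * x + 0) with (- x) by ring. ring. }
  rewrite (RInt_opp (V:=R_CompleteNormedModule)) in E; auto.
  replace (-1 * 0 + 0) with 0 in E by ring.
  replace (-1 * a + 0) with (- a) in E by ring.
  assert (S1 := opp_RInt_swap (V:=R_CompleteNormedModule) f (- a) 0 (Hf _ _)).
  unfold opp in E, S1; simpl in E, S1. unfold opp in E, S1; simpl in E, S1. lra.
Qed.

Lemma ex_RInt_deriv (f : R -> R) (Hf : forall x, ex_derive f x) a b : ex_RInt f a b.
Proof.
  apply (ex_RInt_continuous (V:=R_CompleteNormedModule)). intros.
  apply (ex_derive_continuous (K:=R_AbsRing) (V:=R_NormedModule)). apply Hf.
Qed.

Lemma I_le a b : 0 <= a -> 0 <= b -> I a b <= G (a + b).
Proof.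
  intros Ha Hb. unfold I, G.
  change (fun s => exp (- (s ^ 2) / 2)) with g.
  set (r := (a + b) / 2). set (m := (b - a) / 2).
  set (e := exp (- (a * b) / 2)).
  rewrite (shift g ex_RInt_g m (- a) b), (shift g ex_RInt_g r 0 (a + b)).
  replace (- a - m) with (- r) by (unfold r, m; field).
  replace (b - m) with r by (unfold r, m; field).
  replace (0 - r) with (- r) by ring.
  replace (a + b - r) with r by (unfold r; field).
  set (k := fun y => g (y + r) - e * g (y + m)).
  assert (Hk : forall y, ex_derive k y).
  { intros; unfold k, g. auto_derive. auto. }
  assert (HI : is_RInt k (- r) r (RInt (fun y => g (y + r)) (- r) r - e * RInt (fun y => g (y + m)) (- r) r)).
  { apply (is_RInt_minus (V:=R_NormedModule) (fun y => g (y + r)) (fun y => e * g (y + m))).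
    - apply (RInt_correct (V:=R_CompleteNormedModule)). apply ex_RInt_deriv. intros; unfold g; auto_derive; auto.
    - apply (is_RInt_scal (V:=R_NormedModule) (fun y => g (y + m))).
      apply (RInt_correct (V:=R_CompleteNormedModule)). apply ex_RInt_deriv. intros; unfold g; auto_derive; auto. }
  apply (is_RInt_unique (V:=R_CompleteNormedModule)) in HI.
  assert (0 <= RInt k (- r) r).
  { rewrite sym.
    - apply RInt_ge_0. unfold r; lra.
      + apply ex_RInt_deriv. intros; unfold k, g; auto_derive; auto.
      + intros y _. unfold k, g, e.
        assert (P := pointwise (a * b) r m y).
        replace (- y + r) with (- y + r) in P by ring.
        assert (Q1 : r ^ 2 = a * b + m ^ 2) by (unfold r, m; field).
        assert (Q2 : Rabs m <= r) by (apply Rabs_le; unfold r, m; lra).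
        specialize (P Q1 Q2). lra.
    - apply ex_RInt_deriv; auto.
    - apply ex_RInt_deriv. intros; unfold k, g; auto_derive; auto. }
  lra.
Qed.

Lemma I_t0 t : I t 0 = G t.
Proof.
  unfold I, G. change (fun s => exp (- (s ^ 2) / 2)) with g.
  replace (- (t * 0) / 2) with 0 by field. rewrite exp_0, Rmult_1_l.
  assert (E : RInt (fun y => scal (-1) (g (-1 * y + 0))) 0 t = RInt g (-1 * 0 + 0) (-1 * t + 0)).
  { apply (RInt_comp_lin (V:=R_CompleteNormedModule)). apply ex_RInt_g. }
  rewrite (RInt_ext (fun y => scal (-1) (g (-1 * y + 0))) (fun y => opp (g y))) in E.
  2:{ intros. unfold opp, scal; simpl; unfold mult, opp; simpl.
      replace (-1 * x + 0) with (- x) by ring. unfold g. replace ((- x) ^ 2) with (x ^ 2) by ring. ring. }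
  rewrite (RInt_opp (V:=R_CompleteNormedModule)) in E; [|apply ex_RInt_g].
  replace (-1 * 0 + 0) with 0 in E by ring.
  replace (-1 * t + 0) with (- t) in E by ring.
  assert (S1 := opp_RInt_swap (V:=R_CompleteNormedModule) g (- t) 0 (ex_RInt_g _ _)).
  unfold opp in E, S1; simpl in E, S1. unfold opp in E, S1; simpl in E, S1. lra.
Qed.

Theorem mainTheorem6 :
  (forall alpha beta : R, 0 <= alpha -> 0 <= beta -> I alpha beta < sqrt (PI / 2)) /\
  is_lub (fun y => exists alpha beta : R, 0 <= alpha /\ 0 <= beta /\ y = I alpha beta)
         (sqrt (PI / 2)) /\
  is_lim (fun t => I t 0) p_infty (sqrt (PI / 2)).
Proof.
  assert (P1 : forall alpha beta : R, 0 <= alpha -> 0 <= beta -> I alpha beta < sqrt (PI / 2)).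
  { intros a b Ha Hb. eapply Rle_lt_trans. apply I_le; auto. apply G_lt. lra. }
  split; [exact P1|split].
  - split.
    + intros y [a [b [Ha [Hb ->]]]]. left; apply P1; auto.
    + intros M HM. destruct (Rle_or_lt (sqrt (PI / 2)) M) as [Hle|Hlt]; auto.
      exfalso.
      assert (L := proj2 (is_lim_spec _ _ _) G_lim).
      assert (eps : 0 < sqrt (PI / 2) - M) by lra.
      destruct (L (mkposreal _ eps)) as [N HN]. simpl in HN.
      set (t := Rmax N 0 + 1).
      assert (Ht : N < t) by (unfold t; generalize (Rmax_l N 0); lra).
      assert (Ht0 : 0 <= t) by (unfold t; generalize (Rmax_r N 0); lra).
      specialize (HN t Ht).
      assert (HE : I t 0 <= M). { apply HM. exists t, 0. repeat split; auto. lra. }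
      rewrite I_t0 in HE.
      assert (G t < sqrt (PI / 2)) by (apply G_lt; auto).
      rewrite Rabs_left in HN; lra.
  - apply is_lim_ext_loc with (f := G).
    + exists 0. intros; symmetry; apply I_t0.
    + apply G_lim.
Qed.
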